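(* Let $\mathbb{F}_q$ have characteristic prime to $6$, let $k/\mathbb{F}_q$ be a field, and let $v=\sum_{a\in\Phi_V}v_a\in V_k$. (1) Let $S\subset\{1,2,3,4\}$ be a two-element subset and suppose $v_a=0$ for every weight $a$ with $n_i(a)>0$ for each $i\in S$. Then $\Delta(v)=0$. (2) Suppose $v_a=0$ for every weight $a$ such that $n_i(a)<0$ for at most one $i\in\{1,2,3,4\}$. Then $\Delta(v)=0$.
   Context: Let $J$ be the $4\times4$ anti-diagonal matrix of $1$'s, $\Psi=\mathrm{diag}(J,J)$, $\mathrm{SO}_8$ the special orthogonal group over $\mathbb{F}_q$ of the form with Gram matrix $\Psi$, $H=\mathrm{SO}_8/\mu_2$, $\mathfrak{h}=\mathrm{Lie}\,H$, $\theta$ conjugation by $s=\mathrm{diag}(1,-1,-1,1,1,-1,-1,1)$, $G=(H^\theta)^\circ$, $V=\{Y\in\mathfrak{h}:sYs^{-1}=-Y\}$. $T$ is the image of the diagonal torus $\{\mathrm{diag}(a,b,b^{-1},a^{-1},c,d,d^{-1},c^{-1})\}$; in additive notation put $a_1=ac$, $a_2=a/c$, $a_3=bd$, $a_4=b/d$, and let $n_1,\dots,n_4\in X_*(T)_{\mathbb{Q}}$ be the dual basis. The set $\Phi_V$ of $T$-weights on $V$ consists of the $16$ characters $\frac12(\pm a_1\pm a_2\pm a_3\pm a_4)$, each with one-dimensional weight space, and $v_a$ is the component of $v$ in the $a$-weight space. $\Delta\in\mathbb{F}_q[V]^G$ is the restriction to $V$ of the discriminant of $\mathfrak{h}$ (the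 coefficient of $t^4$ in $\det(t-\mathrm{ad}\,Y)$). *)

(* Defs.v *)
From HB Require Import structures.
From mathcomp Require Import all_boot all_order all_algebra.
Set Implicit Arguments. Unset Strict Implicit. Unset Printing Implicit Defensive.
Import Order.TTheory GRing.Theory Num.Theory.
Local Open Scope ring_scope.

(* Gram matrix Psi = diag(J,J), J the 4x4 anti-diagonal matrix of 1's. *)
Definition Psi (k : fieldType) : 'M[k]_8 :=
  \matrix_(i < 8, j < 8)
    (((i < 4)%N == (j < 4)%N) && ((i %% 4 + j %% 4)%N == 3%N))%:R.

(* s = diag(1,-1,-1,1,1,-1,-1,1) : the sign s_i *)
Definition ssign (i : 'I_8) : bool := (* true iff s_i = 1 *)
  (i %% 4 == 0)%N || (i %% 4 == 3)%N.
Definition smat (k : fieldType) : 'M[k]_8 :=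
  \matrix_(i < 8, j < 8) ((i == j)%:R * (if ssign i then 1 else -1)).

(* Lie algebra so(Psi) (= Lie H, since char k <> 2) *)
Definition in_so (k : fieldType) (Y : 'M[k]_8) : bool :=
  Y^T *m Psi k + Psi k *m Y == 0.

(* V_k = {Y in h : s Y s^-1 = -Y}  (s^-1 = s) *)
Definition in_V (k : fieldType) (Y : 'M[k]_8) : bool :=
  in_so Y && (smat k *m Y *m smat k == - Y).

(* Coordinates n_m (m = 0..3 stands for n_1..n_4) of the character chi_i of T
   on the i-th basis vector, where t = diag(a,b,b^-1,a^-1,c,d,d^-1,c^-1) and
   a = ((a1+a2)/2), b = ((a3+a4)/2), c = ((a1-a2)/2), d = ((a3-a4)/2)
   additively. *)
Definition eps_a : 'I_4 -> rat := fun m => if (m <= 1)%N then 1/2 else 0.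
Definition eps_c : 'I_4 -> rat :=
  fun m => if (val m == 0)%N then 1/2 else if (val m == 1)%N then -(1/2) else 0.
Definition eps_b : 'I_4 -> rat := fun m => if (2 <= m)%N then 1/2 else 0.
Definition eps_d : 'I_4 -> rat :=
  fun m => if (val m == 2)%N then 1/2 else if (val m == 3)%N then -(1/2) else 0.

Definition chi (i : 'I_8) (m : 'I_4) : rat :=
  match val i with
  | 0 => eps_a m | 1 => eps_b m | 2 => - eps_b m | 3 => - eps_a m
  | 4 => eps_c m | 5 => eps_d m | 6 => - eps_d m | _ => - eps_c m
  end.

(* weights: elements of X_*(T)^dual, recorded by their coordinates n_1..n_4 *)
Definition weight := {ffun 'I_4 -> rat}.

(* the T-weight of the elementary matrix E_ij under conjugation *)
Definition wt (i j : 'I_8) : weight := [ffun m => chi i m - chi j m].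

Definition PhiV (a : weight) : bool :=
  [exists i : 'I_8, exists j : 'I_8, (ssign i != ssign j) && (wt i j == a)].

Definition wcomp (k : fieldType) (a : weight) (v : 'M[k]_8) : 'M[k]_8 :=
  \matrix_(i < 8, j < 8) (if wt i j == a then v i j else 0).

(* Basis of so(Psi): B_pq = Psi (E_pq - E_qp), p < q (28 elements);
   coordinates of Z in so(Psi) are (Psi Z)_pq, p < q. *)
Definition soIdx : seq ('I_8 * 'I_8) :=
  [seq ((inord p : 'I_8), (inord q : 'I_8)) |
     p <- iota 0 8, q <- iota p.+1 (7 - p)].
Definition soPair (n : 'I_28) : 'I_8 * 'I_8 := nth (ord0, ord0) soIdx n.

Definition soBasis (k : fieldType) (pq : 'I_8 * 'I_8) : 'M[k]_8 :=
  Psi k *m (delta_mx pq.1 pq.2 - delta_mx pq.2 pq.1).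

(* matrix of ad Y : h -> h in the above basis *)
Definition adMat (k : fieldType) (Y : 'M[k]_8) : 'M[k]_28 :=
  \matrix_(i < 28, j < 28)
    (Psi k *m (Y *m soBasis k (soPair j) - soBasis k (soPair j) *m Y))
      (soPair i).1 (soPair i).2.

Definition Delta (k : fieldType) (Y : 'M[k]_8) : k :=
  (char_poly (adMat Y))`_4.

(* Main.v *)
Require Import Defs.
From HB Require Import structures.
From mathcomp Require Import all_boot all_order all_algebra.
From mathcomp Require Import zify fingroup perm.
Import Order.TTheory GRing.Theory Num.Theory.
Local Open Scope ring_scope.
Set Implicit Arguments. Unset Strict Implicit. Unset Printing Implicit Defensive.

Definition piN (n : nat) : nat := (4 * (n %/ 4) + 3 - n %% 4)%N.
Definition soIdxN : seq (nat * nat) :=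
  [seq (p, q) | p <- iota 0 8, q <- iota p.+1 (7 - p)].
Definition sp (i : nat) : nat * nat := nth (0%N, 0%N) soIdxN i.

Lemma soIdxE : soIdx = [seq ((inord pq.1 : 'I_8), (inord pq.2 : 'I_8)) | pq <- soIdxN].
Proof. reflexivity. Qed.

Lemma soPairE (n : 'I_28) : soPair n = (inord (sp n).1, inord (sp n).2).
Proof.
by rewrite /soPair soIdxE (nth_map (0%N, 0%N)) //; case: n.
Qed.

Lemma sp_lt (n : nat) : (n < 28)%N -> ((sp n).1 < 8)%N && ((sp n).2 < 8)%N.
Proof.
move=> h; have: all (fun n => ((sp n).1 < 8)%N && ((sp n).2 < 8)%N) (iota 0 28) by [].
by move/allP; apply; rewrite mem_iota.
Qed.

Lemma piN_lt x : (x < 8)%N -> (piN x < 8)%N.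
Proof. by do 8?[case: x => [//|x]]. Qed.

Lemma piNK x : (x < 8)%N -> piN (piN x) = x.
Proof. by do 8?[case: x => [//|x]]. Qed.

Definition po (i : 'I_8) : 'I_8 := inord (piN i).

Lemma poK : involutive po.
Proof.
move=> i; have h := piN_lt (ltn_ord i).
apply/val_inj; rewrite /po /= (inordK h) inordK ?piNK //.
Qed.

Lemma PsiE (k : fieldType) : Psi k = \matrix_(i, j) ((j == po i)%:R).
Proof.
apply/matrixP => i j; rewrite !mxE; congr (_%:R).
have H : all (fun a => all (fun b =>
   (((a < 4) == (b < 4)) && (a %% 4 + b %% 4 == 3))%N == (b == piN a)) (iota 0 8)) (iota 0 8) by [].
have /allP/(_ i) := H; rewrite mem_iota ltn_ord => /(_ isT)/allP/(_ j).
rewrite mem_iota ltn_ord => /(_ isT)/eqP ->.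
by rewrite /po -val_eqE /= inordK // piN_lt.
Qed.

Lemma Psi_mull (k : fieldType) (M : 'M[k]_8) a b : (Psi k *m M) a b = M (po a) b.
Proof.
rewrite PsiE mxE (bigD1 (po a)) //= mxE eqxx mul1r big1 ?addr0 //.
by move=> l /negbTE; rewrite mxE eq_sym => ->; rewrite mul0r.
Qed.

Lemma Psi_mulr (k : fieldType) (M : 'M[k]_8) a b : (M *m Psi k) a b = M a (po b).
Proof.
rewrite PsiE mxE (bigD1 (po b)) //= mxE poK eqxx mulr1 big1 ?addr0 //.
move=> l hl; rewrite mxE; case: eqP => [e|]; last by rewrite mulr0.
by move: hl; rewrite e poK eqxx.
Qed.

Lemma mul_delta_r (k : fieldType) (M : 'M[k]_8) (r s a b : 'I_8) :
  (M *m delta_mx r s) a b = M a r * (b == s)%:R.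
Proof.
rewrite mxE (bigD1 r) //= mxE eqxx /= big1 ?addr0 //.
by move=> l /negbTE hl; rewrite mxE hl mulr0.
Qed.

Lemma mul_delta_l (k : fieldType) (M : 'M[k]_8) (r s a b : 'I_8) :
  (delta_mx r s *m M) a b = (a == r)%:R * M s b.
Proof.
rewrite mxE (bigD1 s) //= mxE eqxx andbT big1 ?addr0 //.
by move=> l /negbTE hl; rewrite mxE hl andbF mul0r.
Qed.

Lemma subE (k : fieldType) (A B : 'M[k]_8) a b : (A - B) a b = A a b - B a b.
Proof. by rewrite !mxE. Qed.

Lemma adMat_entry (k : fieldType) (Y : 'M[k]_8) (p q r s : 'I_8) :
  (Psi k *m (Y *m soBasis k (r, s) - soBasis k (r, s) *m Y)) p q =
  (q == s)%:R * Y (po p) (po r) - (q == r)%:R * Y (po p) (po s)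
  - (p == r)%:R * Y s q + (p == s)%:R * Y r q.
Proof.
rewrite Psi_mull /soBasis /= subE.
rewrite mulmxA mulmxBr subE !mul_delta_r !Psi_mulr.
rewrite -mulmxA mulmxBl Psi_mull poK subE !mul_delta_l.
rewrite [Y _ (po r) * _]mulrC [Y _ (po s) * _]mulrC.
by rewrite opprD opprK addrA.
Qed.

Definition LF := seq (int * (nat * nat)).
Definition evalLF (k : fieldType) (v : 'M[k]_8) (l : LF) : k :=
  \sum_(t <- l) t.1%:~R * v (inord t.2.1) (inord t.2.2).
Definition bz (b : bool) : int := if b then 1 else 0.
Definition lfA (i j : nat) : LF :=
  let p := (sp i).1 in let q := (sp i).2 in let r := (sp j).1 in let s := (sp j).2 in
  [:: (bz (q == s), (piN p, piN r)); (- bz (q == r), (piN p, piN s));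
      (- bz (p == r), (s, q)); (bz (p == s), (r, q))].

Lemma bzE (k : fieldType) b : ((bz b)%:~R : k) = b%:R.
Proof. by case: b. Qed.
Lemma bzN (k : fieldType) b : ((- bz b)%:~R : k) = - b%:R.
Proof. by case: b; rewrite ?oppr0. Qed.

Lemma adMatE (k : fieldType) (Y : 'M[k]_8) (i j : 'I_28) :
  adMat Y i j = evalLF Y (lfA i j).
Proof.
rewrite /adMat mxE !soPairE /= adMat_entry.
rewrite /evalLF /lfA !big_cons big_nil addr0 /=.
case/andP: (sp_lt (ltn_ord i)) => h1 h2; case/andP: (sp_lt (ltn_ord j)) => h3 h4.
have poE x : (x < 8)%N -> po (inord x) = inord (piN x) by move=> hx; rewrite /po inordK.
have eqE x y : (x < 8)%N -> (y < 8)%N -> ((inord x : 'I_8) == inord y) = (x == y).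
  by move=> hx hy; rewrite -val_eqE /= !inordK.
rewrite !poE // !eqE // !bzE !bzN !mulNr.
by rewrite !addrA.
Qed.

Definition canon (t : int * (nat * nat)) : int * (nat * nat) :=
  let x := t.2.1 in let y := t.2.2 in
  if ((x < piN y) || ((x == piN y) && (y <= piN x)))%N then t
  else (- t.1, (piN y, piN x)).
Definition negt (t : int * (nat * nat)) : int * (nat * nat) := (- t.1, t.2).
Definition lfcheck (zp : nat -> nat -> bool) (l : LF) : bool :=
  let l2 := map canon [seq t <- l | (t.1 != 0) && ~~ zp t.2.1 t.2.2] in
  all (fun t => (t.2.1 < 8) && (t.2.2 < 8))%N l && perm_eq l2 (map negt l2).

Section Check.
Variables (k : fieldType) (v : 'M[k]_8) (zp : nat -> nat -> bool).
Hypothesis h2 : (2%:R : k) != 0.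
Hypothesis hz : forall x y, (x < 8)%N -> (y < 8)%N -> zp x y ->
  v (inord x) (inord y) = 0.
Hypothesis ha : forall x y, (x < 8)%N -> (y < 8)%N ->
  v (inord x) (inord y) = - v (inord (piN y)) (inord (piN x)).

Lemma lfcheckP l : lfcheck zp l -> evalLF v l = 0.
Proof.
case/andP=> /allP hb hp.
set l1 := filter _ l in hp.
have e1 : evalLF v l = evalLF v l1.
  rewrite /evalLF big_filter [LHS](bigID (fun t => (t.1 != 0) && ~~ zp t.2.1 t.2.2)) /=.
  rewrite [X in _ + X]big_seq_cond [X in _ + X]big1 ?addr0 // => t /andP[tl].
  rewrite negb_and negbK => /orP[/eqP -> | ]; first by rewrite mul0r.
  by case/andP: (hb t tl) => hx hy /negPn hzt; rewrite hz // mulr0.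
have e2 : evalLF v l1 = evalLF v (map canon l1).
  rewrite /evalLF [RHS]big_map; apply: eq_big_seq => t.
  rewrite mem_filter => /andP[_ tl]; case/andP: (hb t tl) => hx hy.
  rewrite /canon; case: ifP => // _ /=.
  by rewrite ha // mulrN mulrNz mulNr.
have e3 : evalLF v (map canon l1) = evalLF v (map negt (map canon l1)).
  by apply: perm_big.
have e4 L : evalLF v (map negt L) = - evalLF v L.
  by rewrite /evalLF big_map -sumrN; apply: eq_bigr => t _ /=; rewrite mulrNz mulNr.
rewrite e1 e2; set E := evalLF v _.
have : E = - E by rewrite {1}/E e3 e4.
move/eqP; rewrite -subr_eq0 opprK -mulr2n -mulr_natr mulf_eq0 (negbTE h2) orbF.
by move/eqP.
Qed.

Lemma adMat_zero (i j : 'I_28) : lfcheck zp (lfA i j) -> adMat v i j = 0.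
Proof. by move=> h; rewrite adMatE lfcheckP. Qed.

End Check.


Lemma det_graded (R : comNzRingType) n (e : 'I_n -> nat) (B : 'M[R]_n) :
  (forall i j, (e i < e j)%N -> B i j = 0) ->
  \det B = \det (\matrix_(i, j) (if e i == e j then B i j else 0)).
Proof.
move=> hB; rewrite /determinant; apply: eq_bigr => s _; congr (_ * _).
case: (boolP [exists i, (e i < e (s i))%N]) => [/existsP[i hi] | hn].
  rewrite (bigD1 i) //= [X in _ = X](bigD1 i) //= mxE hB // (ltn_eqF hi).
  by rewrite !mul0r.
have hle i : (e (s i) <= e i)%N.
  by move/existsPn: hn => /(_ i); rewrite -leqNgt.
have hsum : (\sum_i e (s i) = \sum_i e i)%N.
  by rewrite [RHS](reindex_inj (@perm_inj _ s)).
have := (leqif_sum (fun i (_ : predT i) => leqif_eq (hle i))).2.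
rewrite hsum eqxx => /esym/forallP hall.
apply: eq_bigr => i _; rewrite mxE.
by move: (hall i) => /= /eqP ->; rewrite eqxx.
Qed.

Lemma dvdp_prodX (F : fieldType) (I : finType) (A : {set I}) (f : I -> {poly F}) :
  (forall i, i \in A -> 'X %| f i) -> 'X ^+ #|A| %| \prod_(i in A) f i.
Proof.
move=> h; rewrite -prodr_const; apply: (big_ind2 (fun a b => a %| b)) => //.
by move=> ? ? ? ?; apply: dvdp_mul.
Qed.

Lemma det_bip (F : fieldType) n (N : 'M[{poly F}]_n) (Q : {set 'I_n}) (p0 : 'I_n) :
  p0 \notin Q ->
  (forall i j, i \in Q -> j \in Q -> i != j -> N i j = 0) ->
  (forall i, i \in Q -> 'X %| N i i) ->
  (forall j, j \in Q -> N p0 j = 0) ->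
  (forall j, 'X %| N p0 j) ->
  'X ^+ (#|Q|.*2.+2 - n) %| \det N.
Proof.
move=> hp0 hQQ hQd hp0Q hp0X.
rewrite /determinant.
apply: (big_ind (fun x => 'X ^+ _ %| x)) => //; first exact: dvdp_add.
move=> s _; apply: dvdp_mull.
case: (boolP [exists i, [&& i \in Q, s i \in Q & s i != i]]) =>
    [/existsP[i /and3P[hi hsi hne]]|hn].
  by rewrite (bigD1 i) //= hQQ // ?mul0r ?dvdp0 // eq_sym.
case: (boolP (s p0 \in Q)) => hsp0.
  by rewrite (bigD1 p0) //= hp0Q // mul0r dvdp0.
set B := [set i | s i == i].
set Fx := Q :&: B.
set G := Q :\: B.
rewrite (bigID (fun i => i \in p0 |: Fx)) /=.
apply: dvdp_mulr.
apply: (@dvdp_trans _ ('X ^+ #|p0 |: Fx|)); last first.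
  apply: dvdp_prodX => i; rewrite in_setU1 => /orP[/eqP -> // | ].
  by rewrite inE => /andP[hi]; rewrite inE => /eqP ->; apply: hQd.
apply: dvdp_exp2l.
have h1 := cardsID B Q.
have hp0F : p0 \notin Fx by rewrite inE (negbTE hp0).
have hp0G : p0 \notin G by rewrite inE (negbTE hp0) andbF.
have h2 : #|p0 |: Fx| = #|Fx|.+1 by rewrite cardsU1 hp0F.
have hsub : [set s x | x in p0 |: G] \subset ~: Q.
  apply/subsetP => y /imsetP[x]; rewrite in_setU1 => /orP[/eqP -> -> | ].
    by rewrite inE hsp0.
  rewrite inE /= inE => /andP[hsx hxQ] ->; rewrite inE.
  apply/negP => hsQ; move/existsPn: hn => /(_ x); rewrite hxQ hsQ hsx.
  done.
have h3 := subset_leq_card hsub.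
rewrite card_imset in h3; last exact: perm_inj.
rewrite cardsU1 hp0G in h3.
have h4 := cardsC Q; rewrite card_ord in h4.
rewrite h2 -/Fx -/G in h1 *; rewrite -addnn; move: h3; rewrite /nat_of_bool => h3.
move: h1 h3 h4; set a := #|Q|; set b := #|~: Q|; set f := #|Fx|; set g := #|G|. move=> h1 h3 h4. lia.
Qed.

Lemma char_poly_graded (R : comNzRingType) n (e : 'I_n -> nat) (A : 'M[R]_n) :
  (forall i j, (e i < e j)%N -> A i j = 0) ->
  char_poly A = char_poly (\matrix_(i, j) (if e i == e j then A i j else 0)).
Proof.
move=> hA; rewrite /char_poly (det_graded (e := e)) => [|i j hij]; last first.
  rewrite !mxE hA //.
  have -> : (i == j) = false by apply/negP => /eqP eij; rewrite eij ltnn in hij.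
  by rewrite mulr0n subr0.
congr (\det _); apply/matrixP => i j; rewrite !mxE.
case: eqP => // hne.
have -> : (i == j) = false by apply/negP => /eqP eij; apply: hne; rewrite eij.
by rewrite mulr0n subr0.
Qed.

Lemma kernel_crit (F : fieldType) n (A0 : 'M[F]_n) (Q : {set 'I_n}) (P0 : 'I_n)
    (uf : 'I_n -> F) :
  P0 \notin Q -> (forall i j, i \in Q -> j \in Q -> A0 i j = 0) ->
  (forall j, j \in Q -> uf j = 0) -> (forall j : 'I_n, (P0 < j)%N -> uf j = 0) ->
  uf P0 != 0 -> (forall j, \sum_l uf l * A0 l j = 0) ->
  'X ^+ (#|Q|.*2.+2 - n) %| char_poly A0.
Proof.
move=> hP0 hQ huQ hut hu0 huA.
pose U := \matrix_(i, j) (if i == P0 then uf j else (i == j)%:R) : 'M[F]_n.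
have hdetU : \det U = uf P0.
  rewrite det_trig; last first.
    apply/is_trig_mxP => i j hij; rewrite mxE.
    case: (i =P P0) => [ei | _]; first by rewrite ei in hij; exact: hut.
    by case: eqP hij => // ->; rewrite ltnn.
  rewrite (bigD1 P0) //= big1 ?mulr1; first by rewrite mxE eqxx.
  by move=> i /negbTE hi; rewrite mxE hi eqxx.
have hUA i j : (U *m A0) i j = if i == P0 then 0 else A0 i j.
  rewrite mxE; case: (i =P P0) => [-> | /eqP hi].
    by rewrite -[RHS](huA j); apply: eq_bigr => l _; rewrite mxE eqxx.
  rewrite (bigD1 i) //= big1 ?addr0; first by rewrite mxE (negbTE hi) eqxx mul1r.
  by move=> l /negbTE hl; rewrite mxE (negbTE hi) eq_sym hl mul0r.
pose N := map_mx polyC U *m char_poly_mx A0.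
have hNE i j : N i j = 'X * (U i j)%:P - ((U *m A0) i j)%:P.
  rewrite /N /char_poly_mx mulmxBr mul_mx_scalar -map_mxM !mxE.
  by rewrite mulrC mul_polyC.
have hdet : \det N = (uf P0)%:P * char_poly A0.
  by rewrite det_mulmx det_map_mx hdetU.
have : 'X ^+ (#|Q|.*2.+2 - n) %| \det N.
  apply: (det_bip (p0 := P0)) => //.
  - move=> i j hi hj hij; rewrite hNE hUA mxE.
    have hiP : (i == P0) = false by apply/negP => /eqP e; move: hP0; rewrite -e hi.
    by rewrite hiP (negbTE hij) hQ // mulr0 subr0.
  - move=> i hi; rewrite hNE hUA mxE.
    have hiP : (i == P0) = false by apply/negP => /eqP e; move: hP0; rewrite -e hi.
    by rewrite hiP eqxx hQ // subr0 mulr1.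
  - by move=> j hj; rewrite hNE hUA mxE eqxx huQ // mulr0 subr0.
  - by move=> j; rewrite hNE hUA mxE eqxx subr0 dvdp_mulIl.
by rewrite hdet mul_polyC dvdpZr.
Qed.


Lemma card_setN n (P : pred 'I_n.+1) :
  #|[set i | P i]| = count (fun m => P (inord m)) (iota 0 n.+1).
Proof.
rewrite cardsE cardE /enum_mem size_filter -enumT -val_enum_ord count_map.
by apply: eq_count => i /=; rewrite inord_val.
Qed.

Definition ssignN (i : nat) : bool := (i %% 4 == 0)%N || (i %% 4 == 3)%N.
Definition qN (n : nat) : bool := ssignN (sp n).1 != ssignN (sp n).2.
Definition eN (eL : seq nat) (i : nat) : nat := nth 0%N eL i.
Definition scaleLF (c : int) (l : LF) : LF := [seq (c * t.1, t.2) | t <- l].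
Definition uLF (eL : seq nat) (u : seq (int * nat)) (j : nat) : LF :=
  flatten [seq (if eN eL t.2 == eN eL j then scaleLF t.1 (lfA t.2 j) else [::]) | t <- u].
Definition coreCheck zp eL (c0 : int) (p0 : nat) (uL : seq (int * nat)) : bool :=
  [&& (c0 == 1) || (c0 == -1), (p0 < 28)%N, ~~ qN p0,
      all (fun t => (t.2 < p0)%N && ~~ qN t.2) uL,
      all (fun i => all (fun j =>
         ((eN eL i < eN eL j)%N ==> lfcheck zp (lfA i j)) &&
         ((qN i && qN j) ==> lfcheck zp (lfA i j))) (iota 0 28)) (iota 0 28) &
      all (fun j => lfcheck zp (uLF eL ((c0, p0) :: uL) j)) (iota 0 28)].

Lemma cardQ : #|[set i : 'I_28 | qN i]| = 16%N.
Proof.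
rewrite card_setN (@eq_in_count _ _ qN); first by [].
by move=> m; rewrite mem_iota /= => hm; rewrite inordK.
Qed.

Lemma evalLF_scale (k : fieldType) (v : 'M[k]_8) c l :
  evalLF v (scaleLF c l) = c%:~R * evalLF v l.
Proof.
rewrite /evalLF big_map mulr_sumr; apply: eq_bigr => t _ /=.
by rewrite intrM mulrA.
Qed.

Section Core.
Variables (k : fieldType) (v : 'M[k]_8) (zp : nat -> nat -> bool).
Hypothesis h2 : (2%:R : k) != 0.
Hypothesis hz : forall x y, (x < 8)%N -> (y < 8)%N -> zp x y ->
  v (inord x) (inord y) = 0.
Hypothesis ha : forall x y, (x < 8)%N -> (y < 8)%N ->
  v (inord x) (inord y) = - v (inord (piN y)) (inord (piN x)).

Lemma core eL c0 p0 uL : coreCheck zp eL c0 p0 uL -> Delta v = 0.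
Proof.
move=> /and4P[hc0 hp0 hqp0 /and3P[/allP huL /allP hA /allP hU]].
pose e := fun i : 'I_28 => eN eL i.
have hAij (i j : 'I_28) : ((e i < e j)%N -> adMat v i j = 0) /\
    (qN i -> qN j -> adMat v i j = 0).
  have hi : (i : nat) \in iota 0 28 by rewrite mem_iota ltn_ord.
  have hj : (j : nat) \in iota 0 28 by rewrite mem_iota ltn_ord.
  have /andP[h1 h3] := allP (hA i hi) j hj.
  split=> [hl | hqi hqj]; apply: (adMat_zero h2 hz ha).
    exact: (implyP h1 hl).
  by rewrite hqi hqj in h3.
rewrite /Delta (char_poly_graded (e := e)) => [|i j hij]; last exact: (proj1 (hAij i j) hij).
set A0 := \matrix_(i, j) _.
pose P0 : 'I_28 := inord p0.
pose u := (c0, p0) :: uL.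
pose uf := fun j : 'I_28 => \sum_(t <- u | t.2 == j) (t.1%:~R : k).
have hu t : t \in u -> ((t.2 <= p0)%N && ~~ qN t.2).
  rewrite inE => /orP[/eqP -> | /huL /andP[h1 h3]]; first by rewrite leqnn.
  by rewrite ltnW.
have hP0 : (P0 : nat) = p0 by rewrite /P0 inordK.
have hdiv : 'X ^+ (#|[set i : 'I_28 | qN i]|.*2.+2 - 28) %| char_poly A0.
  apply: (kernel_crit (P0 := P0) (uf := uf)).
  - by rewrite inE hP0.
  - move=> i j; rewrite !inE => hi hj; rewrite /A0 mxE.
    by rewrite (proj2 (hAij i j)) // if_same.
  - move=> j; rewrite inE => hj; rewrite /uf big1_seq // => t /andP[/eqP htj ht].
    by move: (hu t ht); rewrite htj hj andbF.
  - move=> j hj; rewrite /uf big1_seq // => t /andP[/eqP htj ht].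
    by move: (hu t ht); rewrite htj leqNgt -hP0 hj.
  - rewrite /uf big_cons /= hP0 eqxx big1_seq ?addr0.
      by case/orP: hc0 => /eqP ->; rewrite ?oppr_eq0 oner_eq0.
    move=> t /andP[/eqP htj ht]; have /andP[h1 _] := huL t ht.
    by rewrite htj ltnn in h1.
  - move=> j.
    have -> : \sum_l uf l * A0 l j = evalLF v (uLF eL u j).
      rewrite /evalLF /uLF big_flatten big_map.
      have -> : \sum_l uf l * A0 l j =
          \sum_(l : 'I_28) \sum_(t <- u) (if t.2 == (l : nat) then t.1%:~R * A0 l j else 0).
        by apply: eq_bigr => l _; rewrite /uf mulr_suml big_mkcond.
      rewrite exchange_big /=; apply: eq_big_seq => t ht.
      have /andP[ht1 _] := hu t ht.
      have ht28 : (t.2 < 28)%N by apply: leq_ltn_trans ht1 hp0.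
      rewrite -big_mkcond (big_pred1 (inord t.2)) /=; last first.
        by move=> l; rewrite /= -val_eqE /= inordK // eq_sym.
      rewrite /A0 mxE /e inordK // adMatE inordK //.
      case: ifP => _; last by rewrite mulr0 big_nil.
      by rewrite -evalLF_scale.
    apply: (lfcheckP h2 hz ha); apply: hU.
    by rewrite mem_iota ltn_ord.
rewrite cardQ in hdiv.
by case/dvdpP: hdiv => q ->; rewrite coefMXn.
Qed.
End Core.


Local Open Scope ring_scope.
Definition eaN (m : nat) : rat := if (m <= 1)%N then 1/2 else 0.
Definition ecN (m : nat) : rat :=
  if (m == 0)%N then 1/2 else if (m == 1)%N then -(1/2) else 0.
Definition ebN (m : nat) : rat := if (2 <= m)%N then 1/2 else 0.
Definition edN (m : nat) : rat :=
  if (m == 2)%N then 1/2 else if (m == 3)%N then -(1/2) else 0.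
Definition chiN (i m : nat) : rat :=
  match i with
  | 0 => eaN m | 1 => ebN m | 2 => - ebN m | 3 => - eaN m
  | 4 => ecN m | 5 => edN m | 6 => - edN m | _ => - ecN m
  end.

Lemma chiE (i : 'I_8) (m : 'I_4) : chi i m = chiN i m.
Proof. by []. Qed.

Definition zp1 (i0 j0 : nat) (x y : nat) : bool :=
  (ssignN x == ssignN y) ||
  ((0 < chiN x i0 - chiN y i0) && (0 < chiN x j0 - chiN y j0)).
Definition zp2 (x y : nat) : bool :=
  (ssignN x == ssignN y) ||
  (count (fun m => (chiN x m - chiN y m < 0)%R) (iota 0 4) <= 1)%N.
Local Close Scope ring_scope.
Definition data1 (i0 j0 : nat) : seq nat * int * nat * seq (int * nat) :=
  match i0, j0 with
  | 0, 1 => ([:: 2; 2; 1; 2; 2; 2; 2; 1; 0; 1; 1; 1; 1; 0; 1; 1; 1; 1; 0; 0; 0; 0; 1; 1; 1; 1; 1; 1]%N, 1%Z, 2%N, [::])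
  | 0, 2 => ([:: 2; 1; 1; 2; 2; 1; 1; 1; 1; 2; 2; 1; 1; 0; 1; 1; 0; 0; 1; 1; 0; 0; 2; 1; 1; 1; 1; 0]%N, 1%Z, 25%N, [:: (1%Z, 2%N); (1%Z, 7%N); (1%Z, 24%N)])
  | 0, 3 => ([:: 2; 1; 1; 2; 1; 2; 1; 1; 1; 2; 1; 2; 1; 0; 1; 0; 1; 0; 1; 0; 1; 0; 1; 2; 1; 1; 0; 1]%N, 1%Z, 25%N, [:: ((-1)%Z, 2%N); ((-1)%Z, 7%N); ((-1)%Z, 24%N)])
  | 1, 0 => ([:: 2; 2; 1; 2; 2; 2; 2; 1; 0; 1; 1; 1; 1; 0; 1; 1; 1; 1; 0; 0; 0; 0; 1; 1; 1; 1; 1; 1]%N, 1%Z, 2%N, [::])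
  | 1, 2 => ([:: 2; 1; 1; 1; 2; 1; 2; 1; 1; 1; 2; 1; 2; 0; 0; 1; 0; 1; 0; 1; 0; 1; 1; 0; 1; 1; 2; 1]%N, 1%Z, 25%N, [:: (1%Z, 2%N); (1%Z, 7%N); ((-1)%Z, 24%N)])
  | 1, 3 => ([:: 2; 1; 1; 1; 1; 2; 2; 1; 1; 1; 1; 2; 2; 0; 0; 0; 1; 1; 0; 0; 1; 1; 0; 1; 1; 1; 1; 2]%N, 1%Z, 25%N, [:: ((-1)%Z, 2%N); ((-1)%Z, 7%N); (1%Z, 24%N)])
  | 2, 0 => ([:: 2; 1; 1; 2; 2; 1; 1; 1; 1; 2; 2; 1; 1; 0; 1; 1; 0; 0; 1; 1; 0; 0; 2; 1; 1; 1; 1; 0]%N, 1%Z, 25%N, [:: (1%Z, 2%N); (1%Z, 7%N); (1%Z, 24%N)])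
  | 2, 1 => ([:: 2; 1; 1; 1; 2; 1; 2; 1; 1; 1; 2; 1; 2; 0; 0; 1; 0; 1; 0; 1; 0; 1; 1; 0; 1; 1; 2; 1]%N, 1%Z, 25%N, [:: (1%Z, 2%N); (1%Z, 7%N); ((-1)%Z, 24%N)])
  | 2, 3 => ([:: 2; 0; 1; 1; 1; 1; 1; 1; 2; 2; 2; 2; 2; 0; 0; 0; 0; 0; 1; 1; 1; 1; 1; 1; 1; 1; 1; 1]%N, 1%Z, 7%N, [::])
  | 3, 0 => ([:: 2; 1; 1; 2; 1; 2; 1; 1; 1; 2; 1; 2; 1; 0; 1; 0; 1; 0; 1; 0; 1; 0; 1; 2; 1; 1; 0; 1]%N, 1%Z, 25%N, [:: ((-1)%Z, 2%N); ((-1)%Z, 7%N); ((-1)%Z, 24%N)])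
  | 3, 1 => ([:: 2; 1; 1; 1; 1; 2; 2; 1; 1; 1; 1; 2; 2; 0; 0; 0; 1; 1; 0; 0; 1; 1; 0; 1; 1; 1; 1; 2]%N, 1%Z, 25%N, [:: ((-1)%Z, 2%N); ((-1)%Z, 7%N); (1%Z, 24%N)])
  | 3, 2 => ([:: 2; 0; 1; 1; 1; 1; 1; 1; 2; 2; 2; 2; 2; 0; 0; 0; 0; 0; 1; 1; 1; 1; 1; 1; 1; 1; 1; 1]%N, 1%Z, 7%N, [::])
  | _, _ => ([::], 1%Z, 0%N, [::])
  end.
Definition data2 : seq nat * int * nat * seq (int * nat) := ([:: 4; 2; 2; 3; 3; 3; 3; 2; 2; 3; 3; 3; 3; 0; 1; 1; 1; 1; 1; 1; 1; 1; 2; 2; 2; 2; 2; 2]%N, 1%Z, 7%N, [:: (1%Z, 2%N)]).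

Lemma check1 : all (fun ij => (ij.1 != ij.2) ==>
   (let d := data1 ij.1 ij.2 in coreCheck (zp1 ij.1 ij.2) d.1.1.1 d.1.1.2 d.1.2 d.2))
   [seq (a, b) | a <- iota 0 4, b <- iota 0 4].
Proof. vm_compute. reflexivity. Qed.

Lemma check2 : coreCheck zp2 data2.1.1.1 data2.1.1.2 data2.1.2 data2.2.
Proof. vm_compute. reflexivity. Qed.

Local Open Scope ring_scope.

Lemma sm_mull (k : fieldType) (M : 'M[k]_8) a b :
  (smat k *m M) a b = (if ssign a then 1 else -1) * M a b.
Proof.
rewrite mxE (bigD1 a) //= mxE eqxx mul1r big1 ?addr0 //.
by move=> l /negbTE hl; rewrite mxE eq_sym hl mul0r mul0r.
Qed.

Lemma sm_mulr (k : fieldType) (M : 'M[k]_8) a b :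
  (M *m smat k) a b = M a b * (if ssign b then 1 else -1).
Proof.
rewrite mxE (bigD1 b) //= mxE eqxx mul1r big1 ?addr0 //.
by move=> l /negbTE hl; rewrite mxE hl mul0r mulr0.
Qed.

Lemma vzero_s (k : fieldType) (v : 'M[k]_8) : in_V v -> (2%:R : k) != 0 ->
  forall a b, ssign a = ssign b -> v a b = 0.
Proof.
case/andP=> _ /eqP hs h2 a b hab.
have := congr1 (fun M : 'M[_]_8 => M a b) hs; rewrite /= sm_mulr sm_mull mxE hab.
have -> : forall w : k, (if ssign b then 1 else -1) * w * (if ssign b then 1 else -1) = w.
  by move=> w; case: (ssign b); rewrite ?mulr1 ?mul1r // mulN1r mulrN1 opprK.
move/eqP; rewrite -subr_eq0 opprK -mulr2n -mulr_natr mulf_eq0 (negbTE h2) orbF.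
by move/eqP.
Qed.

Lemma vanti (k : fieldType) (v : 'M[k]_8) : in_V v ->
  forall x y, (x < 8)%N -> (y < 8)%N ->
  v (inord x) (inord y) = - v (inord (piN y)) (inord (piN x)).
Proof.
case/andP=> /eqP hso _ x y hx hy.
have := congr1 (fun M : 'M[_]_8 => M (inord y) (po (inord x))) hso.
rewrite /= mxE Psi_mulr Psi_mull poK mxE mxE => /eqP.
rewrite addr_eq0 => /eqP ->.
by rewrite /po !inordK.
Qed.

Lemma hz1 (k : fieldType) (v : 'M[k]_8) (i0 j0 : 'I_4) : in_V v -> (2%:R : k) != 0 ->
  (forall a : weight, PhiV a -> (forall i, i \in [set i0; j0] -> (0 : rat) < a i) ->
        wcomp a v = 0) ->
  forall x y, (x < 8)%N -> (y < 8)%N -> zp1 i0 j0 x y -> v (inord x) (inord y) = 0.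
Proof.
move=> hV h2 H x y hx hy hzp.
have sE z : (z < 8)%N -> ssign (inord z) = ssignN z by move=> hz; rewrite /ssign inordK.
case: (ssignN x =P ssignN y) => [hs | hs].
  by apply: (vzero_s hV h2); rewrite !sE.
have hs' : (ssignN x == ssignN y) = false by apply/eqP.
move: hzp; rewrite /zp1 hs' /= => /andP[c1 c2].
set a := wt (inord x) (inord y).
have hPhi : PhiV a.
  apply/existsP; exists (inord x); apply/existsP; exists (inord y).
  by rewrite eqxx andbT !sE // hs'.
have hpos : forall i, i \in [set i0; j0] -> (0 : rat) < a i.
  move=> i; rewrite !inE => /orP[/eqP -> | /eqP ->]; rewrite /a ffunE !chiE !inordK //.
have := H a hPhi hpos; move/(congr1 (fun M : 'M[_]_8 => M (inord x) (inord y))).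
by rewrite /= mxE eqxx mxE.
Qed.

Lemma hz2 (k : fieldType) (v : 'M[k]_8) : in_V v -> (2%:R : k) != 0 ->
  (forall a : weight, PhiV a -> (#|[set i | (a i < 0)%R]| <= 1)%N ->
        wcomp a v = 0) ->
  forall x y, (x < 8)%N -> (y < 8)%N -> zp2 x y -> v (inord x) (inord y) = 0.
Proof.
move=> hV h2 H x y hx hy hzp.
have sE z : (z < 8)%N -> ssign (inord z) = ssignN z by move=> hz; rewrite /ssign inordK.
case: (ssignN x =P ssignN y) => [hs | hs].
  by apply: (vzero_s hV h2); rewrite !sE.
have hs' : (ssignN x == ssignN y) = false by apply/eqP.
move: hzp; rewrite /zp2 hs' /= => hc.
set a := wt (inord x) (inord y).
have hPhi : PhiV a.
  apply/existsP; exists (inord x); apply/existsP; exists (inord y).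
  by rewrite eqxx andbT !sE // hs'.
have hcard : (#|[set i | (a i < 0)%R]| <= 1)%N.
  rewrite (card_setN (fun i => a i < 0)).
  rewrite (@eq_in_count _ _ (fun m => chiN x m - chiN y m < 0)) //.
  by move=> m; rewrite mem_iota /= => hm; rewrite /a ffunE !chiE !inordK.
have := H a hPhi hcard; move/(congr1 (fun M : 'M[_]_8 => M (inord x) (inord y))).
by rewrite /= mxE eqxx mxE.
Qed.

Theorem lemma3p2 (k : fieldType) (p : nat) :
  prime p -> p \in [pchar k] -> p != 2%N -> p != 3%N ->
  forall v : 'M[k]_8, in_V v ->
  (forall S : {set 'I_4}, #|S| = 2%N ->
     (forall a : weight, PhiV a -> (forall i, i \in S -> (0 : rat) < a i) ->
        wcomp a v = 0) ->
     Delta v = 0)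
  /\
  ((forall a : weight, PhiV a -> (#|[set i | (a i < 0)%R]| <= 1)%N ->
        wcomp a v = 0) ->
   Delta v = 0).
Proof.
move=> hp hpc hp2 _ v hV.
have h2 : (2%:R : k) != 0.
  rewrite -(dvdn_pcharf hpc); apply/negP => hd.
  have := @dvdn_leq p 2 isT hd; have := prime_gt1 hp; move: hp2; lia.
have ha := vanti hV.
split.
  move=> S /eqP/cards2P [i0 [j0 [hne ->]]] H.
  have hz := hz1 hV h2 H.
  have hmem : ((i0 : nat), (j0 : nat)) \in [seq (a, b) | a <- iota 0 4, b <- iota 0 4].
    by apply: allpairs_f; rewrite mem_iota ltn_ord.
  have := allP check1 _ hmem; rewrite /= val_eqE hne /= => hc.
  exact: (core h2 hz ha hc).
move=> H; exact: (core h2 (hz2 hV h2 H) ha check2).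
Qed.
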